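(* Let $\Gamma$ be a countable discrete group and $\mu$ a symmetric probability measure on $\Gamma$. If $0\neq T\in\mathcal B(\ell^2(\Gamma))$ and $\lambda\in\mathbb T$ satisfy $\mathcal P_\mu(T)=\lambda T$, then $\lambda\in\{1,-1\}$.
   Context: $\rho$ denotes the right regular representation of $\Gamma$ on $\ell^2(\Gamma)$, $\rho_g\delta_x=\delta_{xg^{-1}}$. The Markov operator $\mathcal P_\mu:\mathcal B(\ell^2(\Gamma))\to\mathcal B(\ell^2(\Gamma))$ is $\mathcal P_\mu(T)=\sum_{g\in\Gamma}\mu(g)\rho_gT\rho_g^*$. $\mu$ is symmetric if $\mu(g)=\mu(g^{-1})$ for all $g\in\Gamma$. *)

(* Defs.v *)
From mathcomp Require Import all_boot all_order all_algebra.
From mathcomp Require Import reals.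
From mathcomp Require Export complex.
Set Implicit Arguments. Unset Strict Implicit. Unset Printing Implicit Defensive.
Import Order.TTheory GRing.Theory Num.Theory.
Local Open Scope ring_scope.
Local Open Scope complex_scope.

Record cgroup := CGroup {
  cg_sort :> countType;
  cg_mul : cg_sort -> cg_sort -> cg_sort;
  cg_one : cg_sort;
  cg_inv : cg_sort -> cg_sort;
  cg_mulA : associative cg_mul;
  cg_mul1g : left_id cg_one cg_mul;
  cg_mulVg : forall x, cg_mul (cg_inv x) x = cg_one }.

Section Defs.
Variable R : realType.
Variable G : cgroup.
Local Notation C := R[i].

Definition cvgC (u : nat -> C) (L : C) : Prop :=
  forall e : R, 0 < e -> exists N : nat, forall n : nat, (N <= n)%N -> `|u n - L| < e%:C.

Definition cvgR (u : nat -> R) (L : R) : Prop :=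
  forall e : R, 0 < e -> exists N : nat, forall n : nat, (N <= n)%N -> `|u n - L| < e.

(* partial sums of a family indexed by the countable group, along the
   enumeration of G given by pickle (each element occurs exactly once) *)
Definition psumR (f : G -> R) (n : nat) : R :=
  \sum_(k < n) oapp f 0 (@pickle_inv G k).
Definition psumC (f : G -> C) (n : nat) : C :=
  \sum_(k < n) oapp f 0 (@pickle_inv G k).

Definition symmetric_prob (mu : G -> R) : Prop :=
  [/\ forall g, 0 <= mu g, cvgR (psumR mu) 1 & forall g, mu (@cg_inv G g) = mu g].

(* An operator T on l^2(G) is represented by its matrix coefficients
   T x y = < T delta_y , delta_x >.  Boundedness of the operator: the sesquilinear
   form is bounded on finitely supported vectors. *)
Definition bounded_op (T : G -> G -> C) : Prop :=
  exists M : R, forall (s : seq G) (u v : G -> C), uniq s ->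
    `| \sum_(x <- s) \sum_(y <- s) (v x)^* * T x y * u y | ^+ 2
      <= (M ^+ 2)%:C * (\sum_(y <- s) `|u y| ^+ 2) * (\sum_(x <- s) `|v x| ^+ 2).

(* rho_g delta_x = delta_{x g^-1}; hence the (x,y) coefficient of
   rho_g T rho_g^* is T (x g) (y g), and the (x,y) coefficient of
   P_mu(T) = sum_g mu(g) rho_g T rho_g^* is sum_g mu(g) T (x g) (y g). *)
Definition markov_coef_psum (mu : G -> R) (T : G -> G -> C) (x y : G) : nat -> C :=
  psumC (fun g => (mu g)%:C * T (@cg_mul G x g) (@cg_mul G y g)).

Definition markov_eigen (mu : G -> R) (T : G -> G -> C) (lam : C) : Prop :=
  forall x y : G, cvgC (markov_coef_psum mu T x y) (lam * T x y).

End Defs.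

(* Main.v *)
Require Import Defs.
From mathcomp Require Import all_boot all_order all_algebra.
From mathcomp Require Import reals complex.
From mathcomp Require Import boolp classical_sets.
From mathcomp Require Import ring lra.
Import Order.TTheory GRing.Theory Num.Theory.
Set Implicit Arguments. Unset Strict Implicit. Unset Printing Implicit Defensive.
Local Open Scope ring_scope.
Local Open Scope complex_scope.

Section Group.
Variable G : cgroup.
Local Notation mul := (@cg_mul G).
Local Notation inv := (@cg_inv G).

Lemma cg_mulgV (x : G) : mul x (inv x) = cg_one G.
Proof.
set y := mul x (inv x).
have yy : mul y y = y.
  by rewrite /y -cg_mulA (cg_mulA (inv x)) cg_mulVg cg_mul1g.
by rewrite -(cg_mul1g y) -{1}(cg_mulVg y) -cg_mulA yy cg_mulVg.
Qed.

Lemma cg_mulg1 (x : G) : mul x (cg_one G) = x.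
Proof. by rewrite -(cg_mulVg x) cg_mulA cg_mulgV cg_mul1g. Qed.

Lemma cg_mulKV (x g : G) : mul (mul x (inv g)) g = x.
Proof. by rewrite -cg_mulA cg_mulVg cg_mulg1. Qed.
End Group.

Section Norm.
Variable R : realType.
Local Notation C := R[i].

Definition nc (z : C) : R := complex.Re `|z|.
Definition N2 (z : C) : R := complex.Re z ^+ 2 + complex.Im z ^+ 2.

Lemma my_ncE (z : C) : `|z| = (nc z)%:C.
Proof. by rewrite /nc normc_def. Qed.

Lemma my_nc_ge0 z : 0 <= nc z.
Proof. by have := normr_ge0 z; rewrite my_ncE (_ : 0 = 0%:C) // lecR. Qed.

Lemma N2_ge0 z : 0 <= N2 z.
Proof. by rewrite /N2 addr_ge0 // sqr_ge0. Qed.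

Lemma my_ncN2 z : nc z ^+ 2 = N2 z.
Proof. by rewrite /nc normc_def /= sqr_sqrtr // N2_ge0. Qed.

Lemma my_ncD z w : nc (z + w) <= nc z + nc w.
Proof. by rewrite -lecR rmorphD /= -!my_ncE ler_normD. Qed.

Lemma my_ncM z w : nc (z * w) = nc z * nc w.
Proof. by apply: complexI; rewrite rmorphM /= -!my_ncE normrM. Qed.

Lemma my_ncB z w : nc (z - w) = nc (w - z).
Proof. by apply: complexI; rewrite -!my_ncE distrC. Qed.

Lemma my_nc_lt (z : C) (e : R) : `|z| < e%:C -> nc z < e.
Proof. by rewrite my_ncE ltcR. Qed.

Lemma my_nc_eq0 z : nc z = 0 -> z = 0.
Proof. by move=> h; apply/normr0_eq0; rewrite my_ncE h. Qed.

Lemma Re_le_nc z : `|complex.Re z| <= nc z.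
Proof.
rewrite /nc normc_def /= -sqrtr_sqr ler_sqrt ?addr_ge0 ?sqr_ge0 //.
by rewrite lerDl sqr_ge0.
Qed.

Lemma Im_le_nc z : `|complex.Im z| <= nc z.
Proof.
rewrite /nc normc_def /= -sqrtr_sqr ler_sqrt ?addr_ge0 ?sqr_ge0 //.
by rewrite lerDr sqr_ge0.
Qed.

Lemma Re_sum n (F : 'I_n -> C) :
  complex.Re (\sum_(k < n) F k) = \sum_(k < n) complex.Re (F k).
Proof.
by apply: (big_morph (@complex.Re R)) => // [[a b] [c d]].
Qed.

Lemma Im_sum n (F : 'I_n -> C) :
  complex.Im (\sum_(k < n) F k) = \sum_(k < n) complex.Im (F k).
Proof.
by apply: (big_morph (@complex.Im R)) => // [[a b] [c d]].
Qed.

Lemma mul_le_abs (a x e : R) : `|x| < e -> a * x <= `|a| * e.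
Proof.
move=> h; apply: (le_trans (ler_norm _)); rewrite normrM.
by apply: ler_wpM2l => //; apply: ltW.
Qed.

Lemma Re_B (z w : C) : complex.Re (z - w) = complex.Re z - complex.Re w.
Proof. by case: z w => [? ?] [? ?]. Qed.

Lemma Im_B (z w : C) : complex.Im (z - w) = complex.Im z - complex.Im w.
Proof. by case: z w => [? ?] [? ?]. Qed.

Lemma fh_aux (m Mx : R) (c w : C) : 0 <= m -> N2 c <= Mx ->
  m * N2 (c - w) <= m * (Mx + N2 w) - 2 * (complex.Re w * complex.Re (m%:C * c)
                    + complex.Im w * complex.Im (m%:C * c)).
Proof. by case: c w => [c1 c2] [w1 w2]; rewrite /N2 /= => hm hc; nra. Qed.

End Norm.
Section Main.
Variables (R : realType) (G : cgroup) (mu : G -> R) (T : G -> G -> R[i]) (lam : R[i]).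
Hypotheses (hmu : symmetric_prob mu) (hT : bounded_op T) (hlam : `|lam| = 1)
  (heig : markov_eigen mu T lam).

Lemma T_bounded : exists B : R, forall p q, nc (T p q) <= B.
Proof.
case: hT => M0 hM0; exists `|M0| => p q.
have h : `|T p q| ^+ 2 <= (M0 ^+ 2)%:C.
  have [eqp|npq] := eqVneq q p.
  - rewrite eqp; have := hM0 [:: p] (fun y => if y == p then 1 else 0)
      (fun x => if x == p then 1 else 0) isT.
    rewrite !big_cons !big_nil /= eqxx rmorph1 !mul1r mulr1 !addr0 normr1 expr1n !mulr1.
    done.
  - have := hM0 [:: p; q] (fun y => if y == q then 1 else 0)
      (fun x => if x == p then 1 else 0).
    rewrite /= inE eq_sym npq => /(_ isT).
    rewrite !big_cons !big_nil /= !eqxx (negbTE npq) eq_sym (negbTE npq) rmorph1 rmorph0.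
    rewrite ?(mul0r, mulr0, mul1r, mulr1, addr0, add0r, normr0, normr1, expr1n, expr0n) /=.
    rewrite ?(mul0r, mulr0, mul1r, mulr1, addr0, add0r).
    done.
move: h; rewrite my_ncE -rmorphXn lecR my_ncN2 => h.
have h2 : nc (T p q) ^+ 2 <= `|M0| ^+ 2 by rewrite real_normK ?num_real // my_ncN2.
have := my_nc_ge0 (T p q); have := normr_ge0 M0; nra.
Qed.

Definition Sset : set R := [set r | exists p q, r = nc (T p q)].

Lemma S_has_sup : has_sup Sset.
Proof.
split.
  by exists (nc (T (cg_one G) (cg_one G))); exists (cg_one G), (cg_one G).
case: T_bounded => B hB; exists B => r [p [q ->]]; exact: hB.
Qed.

Definition M := sup Sset.

Lemma nc_le_M p q : nc (T p q) <= M.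
Proof. by apply: sup_upper_bound; [exact: S_has_sup | exists p, q]. Qed.

Lemma M_adherent eps : 0 < eps -> exists p q, M - eps < nc (T p q).
Proof.
move=> he; have [r [p [q ->]] hr] := sup_adherent he S_has_sup.
by exists p, q.
Qed.

Lemma N2_le_M2 p q : N2 (T p q) <= M ^+ 2.
Proof.
rewrite -my_ncN2; have := nc_le_M p q; have := my_nc_ge0 (T p q); nra.
Qed.

Lemma nc_lam : nc lam = 1.
Proof. by apply: complexI; rewrite -my_ncE hlam. Qed.

Lemma mu_pos : exists g, 0 < mu g.
Proof.
case: hmu => mu0 mucvg _.
case: (EM (exists g, 0 < mu g)) => // hn; exfalso.
have z : forall g, mu g = 0.
  move=> g; apply/eqP; rewrite eq_le mu0 andbT leNgt; apply/negP => hg.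
  by apply: hn; exists g.
have [N hN] := mucvg 1 ltr01.
have := hN N (leqnn N).
rewrite /psumR big1 ?sub0r ?normrN ?normr1 ?ltxx //.
by move=> k _; case: pickle_inv => //= g; rewrite z.
Qed.

Lemma key p q g :
  mu g * N2 (T (cg_mul p g) (cg_mul q g) - lam * T p q) <= M ^+ 2 - N2 (T p q).
Proof.
case: hmu => mu0 mucvg _.
pose a := T p q; pose w := lam * a.
pose c := fun g => T (cg_mul p g) (cg_mul q g).
have hN2w : N2 w = N2 a by rewrite -!my_ncN2 my_ncM nc_lam mul1r.
pose K := M ^+ 2 + N2 w.
pose f := fun g => mu g * N2 (c g - w).
pose h := fun g => mu g * K - 2 * (complex.Re w * complex.Re ((mu g)%:C * c g)
                    + complex.Im w * complex.Im ((mu g)%:C * c g)).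
have f0 : forall g, 0 <= f g by move=> g'; rewrite /f mulr_ge0 ?N2_ge0.
have fh : forall g, f g <= h g.
  move=> g'; rewrite /f /h /K.
  exact: fh_aux (mu0 g') (N2_le_M2 (cg_mul p g') (cg_mul q g')).
pose Fs := fun n => \sum_(k < n) oapp f 0 (@pickle_inv G k).
pose Hs := fun n => \sum_(k < n) oapp h 0 (@pickle_inv G k).
pose P := markov_coef_psum mu T p q.
have HsE : forall n, Hs n = K * psumR mu n
    - 2 * (complex.Re w * complex.Re (P n) + complex.Im w * complex.Im (P n)).
  move=> m; rewrite /P /markov_coef_psum /psumC Re_sum Im_sum /psumR.
  rewrite !mulr_sumr -big_split /=.
  rewrite mulr_sumr -sumrB; apply: eq_bigr => k _; case: pickle_inv => //= .
  move=> g'; rewrite /h mulrC //.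
  by rewrite !mulr0 addr0 mulr0 subr0.
have FsH : forall n, Fs n <= Hs n.
  by move=> m; apply: ler_sum => k _; case: pickle_inv => //= g'; exact: fh.
have Fterm : forall n, (pickle g < n)%N -> f g <= Fs n.
  move=> m hn; rewrite /Fs (bigD1 (Ordinal hn)) //= pickleK_inv /= lerDl.
  by apply: sumr_ge0 => k _; case: pickle_inv => //= g'.
pose Kb := `|K| + `|2 * complex.Re w| + `|2 * complex.Im w|.
have main : forall e, 0 < e -> f g <= M ^+ 2 - N2 a + Kb * e.
  move=> e he.
  have [N1 hN1] := mucvg e he.
  have [N2' hN2] := heig p q he.
  pose n := maxn (maxn N1 N2') (pickle g).+1.
  have hn1 : (N1 <= n)%N by rewrite /n !leq_max leqnn.
  have hn2 : (N2' <= n)%N by rewrite /n !leq_max leqnn orbT.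
  have hn3 : (pickle g < n)%N by rewrite /n !leq_max leqnn orbT.
  have e1 := hN1 n hn1.
  have e2 := my_nc_lt (hN2 n hn2).
  have e3 : `|complex.Re (P n) - complex.Re w| < e.
    by rewrite -Re_B; apply: le_lt_trans (Re_le_nc _) e2.
  have e4 : `|complex.Im (P n) - complex.Im w| < e.
    by rewrite -Im_B; apply: le_lt_trans (Im_le_nc _) e2.
  have t1 := mul_le_abs K e1.
  have t2 := mul_le_abs (- (2 * complex.Re w)) e3.
  have t3 := mul_le_abs (- (2 * complex.Im w)) e4.
  rewrite !normrN in t2 t3.
  apply: (le_trans (Fterm n hn3)); apply: (le_trans (FsH n)); rewrite HsE.
  have : N2 w = complex.Re w ^+ 2 + complex.Im w ^+ 2 by [].
  rewrite /Kb /K -hN2w.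
  move: t1 t2 t3; rewrite /K.
  move: (complex.Re w) (complex.Im w) (complex.Re (P n)) (complex.Im (P n)) (N2 w) (psumR mu n).
  move=> w1 w2 P1 P2 nw Q t1 t2 t3 hnw.
  nra.
apply/ler_addgt0Pr => e he.
have hKb : 0 <= Kb by rewrite /Kb !addr_ge0.
have := main (e / (Kb + 1)) (divr_gt0 he (ltr_wpDl hKb ltr01)).
have : Kb * (e / (Kb + 1)) <= e.
  rewrite mulrA ler_pdivrMr ?(ltr_wpDl hKb ltr01) //; nra.
move=> h1 h2; rewrite -/(f g); lra.
Qed.

Lemma step (hne : exists x y, T x y != 0) :
  exists c, 0 < c /\ 0 < M /\ forall d, 0 < d -> d <= 1 ->
    c * M ^+ 2 * nc (1 - lam * lam) ^+ 2 <= 16 * d * (c + M).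
Proof.
case: hmu => mu0 mucvg musym.
have [x0 [y0 hxy]] := hne.
have Mpos : 0 < M.
  apply: (lt_le_trans _ (nc_le_M x0 y0)); rewrite lt_def my_nc_ge0 andbT.
  by apply/eqP => /my_nc_eq0 /eqP; rewrite (negbTE hxy).
have [g1 hg1] := mu_pos.
pose c := mu g1.
pose h := cg_inv g1.
have muh : mu h = c by rewrite /h musym.
exists c; split => //; split => // d d0 dle1.
pose eta := Num.min (c * d ^+ 2 / (2 * M)) (M / 2).
have eta0 : 0 < eta.
  have c0 : 0 < c by [].
  rewrite lt_min; apply/andP; split; apply: divr_gt0; try lra.
  by apply: mulr_gt0 => //; apply: exprn_gt0.
have eta1 : eta <= c * d ^+ 2 / (2 * M) by rewrite ge_min lexx.
have eta2 : eta <= M / 2 by rewrite ge_min lexx orbT.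
have eta1' : eta * (2 * M) <= c * d ^+ 2.
  by rewrite -ler_pdivlMr //; lra.
have [p [q hpq]] := M_adherent eta0.
pose a := T p q.
pose b := T (cg_mul p h) (cg_mul q h).
have hba : T (cg_mul (cg_mul p h) g1) (cg_mul (cg_mul q h) g1) = a.
  by rewrite /h !cg_mulKV.
have k1 := key p q h; rewrite muh -/a -/b in k1.
have k2 := key (cg_mul p h) (cg_mul q h) g1; rewrite hba -/b -/c in k2.
rewrite -!my_ncN2 in k1 k2.
set A := nc a in k1 k2 hpq *.
set B := nc b in k1 k2 *.
set d1 := nc (b - lam * a) in k1.
set d2 := nc (a - lam * b) in k2.
set D := nc (1 - lam * lam).
have A0 : 0 <= A := my_nc_ge0 _.
have B0 : 0 <= B := my_nc_ge0 _.
have d10 : 0 <= d1 := my_nc_ge0 _.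
have d20 : 0 <= d2 := my_nc_ge0 _.
have D0 : 0 <= D := my_nc_ge0 _.
have AM : A <= M := nc_le_M _ _.
have BM : B <= M := nc_le_M _ _.
have tri1 : A <= B + d1.
  have -> : A = nc (lam * a) by rewrite my_ncM nc_lam mul1r.
  have -> : lam * a = b + (lam * a - b) by rewrite addrC subrK.
  by rewrite /d1 (my_ncB (b)) ; apply: my_ncD.
have tri2 : A * D <= d2 + d1.
  have -> : A * D = nc (a * (1 - lam * lam)) by rewrite my_ncM.
  have -> : a * (1 - lam * lam) = (a - lam * b) + lam * (b - lam * a).
    by ring.
  by apply: (le_trans (my_ncD _ _)); rewrite my_ncM nc_lam mul1r.
have c0 : 0 < c by [].
have s1 : M ^+ 2 - A ^+ 2 <= c * d ^+ 2.
  have h1 : (M - A) * (M + A) <= (M - A) * (2 * M) by apply: ler_wpM2l; lra.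
  have h2 : (M - A) * (2 * M) <= eta * (2 * M) by apply: ler_wpM2r; lra.
  have -> : M ^+ 2 - A ^+ 2 = (M - A) * (M + A) by ring.
  lra.
have s2 : d1 <= d.
  have h1 : d1 ^+ 2 <= d ^+ 2 by rewrite -(ler_pM2l c0); lra.
  by move: h1; rewrite (@ler_pXn2r _ 2) ?nnegrE // ltW.
have s3 : M ^+ 2 - B ^+ 2 <= c * d ^+ 2 + 2 * M * d.
  have h1 : (M - B) * (M + B) <= (M - B) * (2 * M) by apply: ler_wpM2l; lra.
  have h2 : (M - B) * (2 * M) <= (eta + d) * (2 * M) by apply: ler_wpM2r; lra.
  have -> : M ^+ 2 - B ^+ 2 = (M - B) * (M + B) by ring.
  lra.
have s4 : c * d2 ^+ 2 <= c * d ^+ 2 + 2 * M * d by lra.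
have s5 : M / 2 <= A by lra.
have s6 : (A * D) ^+ 2 <= 2 * d1 ^+ 2 + 2 * d2 ^+ 2.
  have AD0 : 0 <= A * D by rewrite mulr_ge0.
  have h1 : (A * D) ^+ 2 <= (d2 + d1) ^+ 2.
    by rewrite (@ler_pXn2r _ 2) ?nnegrE // addr_ge0.
  have h2 : 0 <= (d1 - d2) ^+ 2 by apply: sqr_ge0.
  have -> : 2 * d1 ^+ 2 + 2 * d2 ^+ 2 = (d2 + d1) ^+ 2 + (d1 - d2) ^+ 2 by ring.
  lra.
have s7 : c * (A * D) ^+ 2 <= 4 * c * d ^+ 2 + 4 * M * d.
  have h1 : c * (A * D) ^+ 2 <= c * (2 * d1 ^+ 2 + 2 * d2 ^+ 2) by apply: ler_wpM2l; lra.
  have -> : 4 * c * d ^+ 2 + 4 * M * d = 2 * (c * d ^+ 2) + 2 * (c * d ^+ 2 + 2 * M * d) by ring.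
  have e1 : c * (2 * d1 ^+ 2 + 2 * d2 ^+ 2) = 2 * (c * d1 ^+ 2) + 2 * (c * d2 ^+ 2) by ring.
  rewrite e1 in h1.
  lra.
have s8 : c * d ^+ 2 <= c * d.
  apply: ler_wpM2l; first lra.
  by rewrite expr2 ger_pMr.
have s9 : M ^+ 2 <= 4 * A ^+ 2.
  have -> : 4 * A ^+ 2 = (2 * A) ^+ 2 by ring.
  by rewrite (@ler_pXn2r _ 2) ?nnegrE //; lra.
have s10 : c * M ^+ 2 * D ^+ 2 <= 4 * (c * (A * D) ^+ 2).
  have : 0 <= c * D ^+ 2 by rewrite mulr_ge0 ?sqr_ge0 ?ltW.
  nra.
nra.
Qed.

Lemma lam_sq (hne : exists x y, T x y != 0) : lam * lam = 1.
Proof.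
have [c [c0 [M0 hd]]] := step hne.
set D := nc (1 - lam * lam) in hd.
suff : D = 0 by move/my_nc_eq0/eqP; rewrite subr_eq0 => /eqP <-.
have D0 : 0 <= D := my_nc_ge0 _.
apply/eqP; rewrite eq_le D0 andbT leNgt; apply/negP => Dp.
pose X := c * M ^+ 2 * D ^+ 2.
have X0 : 0 < X by rewrite /X !mulr_gt0 ?exprn_gt0.
pose d := Num.min 1 (X / (32 * (c + M))).
have d0 : 0 < d.
  by rewrite lt_min ltr01 /=; apply: divr_gt0 => //; lra.
have d1 : d <= 1 by rewrite ge_min lexx.
have d2 : d <= X / (32 * (c + M)) by rewrite ge_min lexx orbT.
have d2' : d * (32 * (c + M)) <= X by rewrite -ler_pdivlMr //; lra.
have := hd d d0 d1; rewrite -/X; nra.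
Qed.

End Main.

Theorem theorem2p3 (R : realType) (G : cgroup) (mu : G -> R) (T : G -> G -> R[i])
    (lam : R[i]) :
  symmetric_prob mu ->
  bounded_op T ->
  (exists x y : G, T x y != 0) ->
  `|lam| = 1 ->
  markov_eigen mu T lam ->
  lam = 1 \/ lam = -1.
Proof.
move=> hmu hT hne hlam heig.
have := lam_sq hmu hT hlam heig hne.
move=> h.
have e : (lam - 1) * (lam + 1) = 0.
  have -> : (lam - 1) * (lam + 1) = lam * lam - 1 by ring.
  by rewrite h subrr.
move/eqP: e; rewrite mulf_eq0 subr_eq0 addr_eq0 => /orP [/eqP -> | /eqP ->].
  by left.
by right.
Qed.
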